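(* Let $X$ be a locally convex space and let $T\in\mathcal{M}(X)$. Assume that for every open convex $V\subset X$ with $V\cap D(T)\neq\emptyset$ one has $\operatorname{Pr}_{X}[\varphi_{T|_{V}}<c]\cap V\subset\overline{D(T)}$. Then $\overline{D(T)}$ is convex. In particular, if $T\in\mathcal{M}(X)$ is locatable in $\overline{D(T)}$, or if $T\in\mathcal{M}(X)$ is locally-NI, then $\overline{D(T)}$ is convex.
   Context: $X$ is a non-trivial Hausdorff locally convex space, $X^*$ its dual with weak-star topology, $c(x,x^* )=\langle x,x^*\rangle$ on $Z=X\times X^*$. Operators are identified with their graphs; $D(T)$ is the domain, $\overline{D(T)}$ its closure; $T|_V$ has graph $\operatorname{Graph}T\cap(V\times X^* )$. $\varphi_{T}(x,x^{*})=\sup\{\langle x,u^{*}\rangle+\langle u,x^{*}\rangle-\langle u,u^{*}\rangle\mid(u,u^{*})\in T\}$ ($\sup\emptyset=-\infty$). $[f<g]=\{z\mid f(z)<g(z)\}$, etc. $\mathcal{M}(X)$: monotone operators with non-empty graph. $V$ locates $T$ in $S$ if $\operatorname{Pr}_X([\varphi_{T|_V}\le c])\cap V\subset S$; $T$ is locatable in $S$ if every open convex $V$ with $V\cap D(T)\ne\emptyset$ locates $T$ in $S$. $T$ is $V$-NI if $\varphi_{T|_V}\ge c$ on $V\times X^*$; locally-NI if $T$ is $V$-NI for every open convex $V$ with $V\cap D(T)\neq\emptyset$. *)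

(* Defs.v *)
From HB Require Import structures.
From mathcomp Require Import all_boot all_order all_algebra.
From mathcomp Require Import all_classical all_reals all_analysis.
Set Implicit Arguments. Unset Strict Implicit. Unset Printing Implicit Defensive.
Import Order.TTheory GRing.Theory Num.Theory.
Local Open Scope classical_set_scope.
Local Open Scope ring_scope.

(* X is a locally convex space [tvsType R] over the
   reals [R : realType]; the dual X^* is represented by the predicate
   [is_dual] on functions X -> R (continuous linear functionals); the
   coupling is <x, x^*> = x^* x.  An operator is identified with its graph,
   a set of pairs (x, x^* ) with x^* in X^*. *)

Section Defs.
Context {R : realType} {E : tvsType R}.

Definition is_dual (f : E -> R) : Prop :=
  (forall (a : R) (x y : E), f (a *: x + y) = a * f x + f y) /\ continuous (f : E -> R^o).

Definition coupling (p : E * (E -> R)) : R := p.2 p.1.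

Definition dom_op (T : set (E * (E -> R))) : set E :=
  [set x | exists xs, T (x, xs)].

Definition restr_op (T : set (E * (E -> R))) (V : set E) : set (E * (E -> R)) :=
  [set p | T p /\ V p.1].

(* Fitzpatrick function, sup of empty set = -oo *)
Definition fitz (T : set (E * (E -> R))) (p : E * (E -> R)) : \bar R :=
  ereal_sup [set ((u.2 p.1 + p.2 u.1 - u.2 u.1)%:E) | u in T].

Definition monotone_op (T : set (E * (E -> R))) : Prop :=
  forall p q, T p -> T q -> 0 <= p.2 (p.1 - q.1) - q.2 (p.1 - q.1).

Definition monotone_nonempty (T : set (E * (E -> R))) : Prop :=
  (forall p, T p -> is_dual p.2) /\ monotone_op T /\ T !=set0.

Definition open_convex (V : set E) : Prop := open V /\ convex_set (V : set (convex_lmodType E)).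

Definition locates (V : set E) (T : set (E * (E -> R))) (S : set E) : Prop :=
  [set x | exists xs, is_dual xs /\ (fitz (restr_op T V) (x, xs) <= (xs x)%:E)%E]
    `&` V `<=` S.

Definition locatable (T : set (E * (E -> R))) (S : set E) : Prop :=
  forall V, open_convex V -> V `&` dom_op T !=set0 -> locates V T S.

Definition V_NI (V : set E) (T : set (E * (E -> R))) : Prop :=
  forall x xs, V x -> is_dual xs -> ((xs x)%:E <= fitz (restr_op T V) (x, xs))%E.

Definition locally_NI (T : set (E * (E -> R))) : Prop :=
  forall V, open_convex V -> V `&` dom_op T !=set0 -> V_NI V T.

End Defs.

(* Main.v *)
From HB Require Import structures.
From mathcomp Require Import all_boot all_order all_algebra.
From mathcomp Require Import all_classical all_reals all_analysis.
From mathcomp Require Import ring lra.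
Require Import Defs.
Import Order.TTheory GRing.Theory Num.Theory.
Local Open Scope classical_set_scope.
Local Open Scope ring_scope.

Section HBsec.
Context {R : realType} {E : lmodType R}.
Variable p : E -> R.
Hypothesis psub : forall x y, p (x + y) <= p x + p y.
Hypothesis phom : forall (r : R) x, 0 < r -> p (r *: x) <= r * p x.

Lemma phomE r x : 0 < r -> p (r *: x) = r * p x.
Proof.
move=> r0; apply/eqP; rewrite eq_le phom //=.
have h : p (r^-1 *: (r *: x)) <= r^-1 * p (r *: x).
  by apply: phom; rewrite invr_gt0.
rewrite scalerA mulVf ?gt_eqF // scale1r in h.
by rewrite -ler_pdivlMl.
Qed.

Lemma p0 : p 0 = 0.
Proof.
have := @phomE 2 0 (ltr0Sn _ 1); rewrite scaler0 => h.
lra.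
Qed.

Definition goodG (v : E) (G : set (E * R)) :=
  [/\ (forall x a b, G (x, a) -> G (x, b) -> a = b),
      (forall x a y b, G (x, a) -> G (y, b) -> G (x + y, a + b)),
      (forall r x a, G (x, a) -> G (r *: x, r * a)),
      (forall x a, G (x, a) -> a <= p x) & G (v, p v)].

Lemma goodG_ext v A w : goodG v A -> (forall a, ~ A (w, a)) ->
  exists B, A `<` B /\ goodG v B.
Proof.
move=> [fA dA sA pA vA] wA.
have A00 : A (0, 0).
  by have := sA 0 _ _ vA; rewrite scale0r mul0r.
have key : forall y1 b1 y2 b2, A (y1, b1) -> A (y2, b2) ->
    b1 - p (y1 - w) <= p (y2 + w) - b2.
  move=> y1 b1 y2 b2 h1 h2.
  have h3 := pA _ _ (dA _ _ _ _ h1 h2).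
  have h4 := psub (y1 - w) (y2 + w).
  have e : y1 - w + (y2 + w) = y1 + y2.
    by rewrite addrACA addNr addr0.
  rewrite e in h4; lra.
pose L := [set r | exists y b, A (y, b) /\ r = b - p (y - w)].
have Lne : L !=set0 by exists (0 - p (0 - w)); exists 0, 0.
have Lub : has_ubound L.
  exists (p (0 + w) - 0) => r [y [b [h ->]]]; exact: key.
pose c := sup L.
have cge : forall y b, A (y, b) -> b - p (y - w) <= c.
  by move=> y b h; apply: ub_le_sup => //; exists y, b.
have cle : forall y b, A (y, b) -> c <= p (y + w) - b.
  move=> y b h; apply: ge_sup => // r [y' [b' [h' ->]]]; exact: key.
have subA : forall x1 a1 x2 a2, A (x1, a1) -> A (x2, a2) -> A (x1 - x2, a1 - a2).
  move=> x1 a1 x2 a2 h1 h2; have := dA _ _ _ _ h1 (sA (-1) _ _ h2).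
  by rewrite scaleN1r mulN1r.
pose B := [set q : E * R | exists x a s, A (x, a) /\ q.1 = x + s *: w /\ q.2 = a + s * c].
exists B; split.
  split.
    by move=> [x a] h; exists x, a, 0; rewrite scale0r mul0r !addr0.
  move=> /(_ (w, c)) H; apply: (wA c); apply: H.
  by exists 0, 0, 1; rewrite scale1r mul1r !add0r.
split.
- move=> x a b [x1 [a1 [s1 [A1 [/= e1 ea]]]]] [x2 [a2 [s2 [A2 [/= e2 eb]]]]].
  have [es|ns] := eqVneq s1 s2.
    subst s2; have ex : x1 = x2 by apply: (addIr (s1 *: w)); rewrite -e1 -e2.
    by subst x2; rewrite ea eb (fA _ _ _ A1 A2).
  have ex1 : x1 = x - s1 *: w by rewrite e1 addrK.
  have ex2 : x2 = x - s2 *: w by rewrite e2 addrK.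
  have exw : x2 - x1 = (s1 - s2) *: w.
    by rewrite ex1 ex2 opprB addrC addrA subrK scalerBl.
  have hw := sA (s1 - s2)^-1 _ _ (subA _ _ _ _ A2 A1).
  rewrite exw scalerA mulVf ?subr_eq0 // scale1r in hw.
  by case: (wA _ hw).
- move=> x a y b [x1 [a1 [s1 [A1 [/= -> ->]]]]] [x2 [a2 [s2 [A2 [/= -> ->]]]]].
  exists (x1 + x2), (a1 + a2), (s1 + s2); split; first exact: dA.
  by rewrite /= scalerDl mulrDl addrACA [in X in _ /\ X]addrACA.
- move=> r x a [x1 [a1 [s1 [A1 [/= -> ->]]]]].
  exists (r *: x1), (r * a1), (r * s1); split; first exact: sA.
  by rewrite /= scalerDr scalerA mulrDr mulrA.
- move=> x a [x1 [a1 [s [A1 [/= -> ->]]]]].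
  have [s0|s0|->] := ltrgtP s 0; last by rewrite scale0r mul0r !addr0; exact: pA.
  + have t0 : 0 < - s by rewrite oppr_gt0.
    have h := cge _ _ (sA (- s)^-1 _ _ A1).
    have e : (- s)^-1 *: x1 - w = (- s)^-1 *: (x1 + s *: w).
      by rewrite scalerDr scalerA invrN mulNr mulVf ?lt_eqF // scaleN1r.
    rewrite e phomE ?invr_gt0 // -mulrBr ler_pdivrMl // in h.
    nra.
  + have h := cle _ _ (sA s^-1 _ _ A1).
    have e : s^-1 *: x1 + w = s^-1 *: (x1 + s *: w).
      by rewrite scalerDr scalerA mulVf ?gt_eqF // scale1r.
    rewrite e phomE ?invr_gt0 // -mulrBr ler_pdivlMl // in h.
    nra.
- by exists v, (p v), 0; rewrite scale0r mul0r !addr0.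
Qed.


Lemma HB_exists v : 0 < p v -> exists f : E -> R,
  (forall (a : R) x y, f (a *: x + y) = a * f x + f y) /\
  (forall x, f x <= p x) /\ f v = p v.
Proof.
move=> pv0.
pose P := [set G : set (E * R) | G = set0 \/ goodG v G].
have [A [PA Amax]] : exists A, P A /\ forall B, A `<` B -> ~ P B.
  apply: Zorn_bigcup => F FP Ftot.
  have [e|ne] := pselect (\bigcup_(X in F) X = set0); first by left.
  right.
  have gdF : forall X q, F X -> X q -> goodG v X.
    move=> X q FX Xq; case: (FP X FX) => // eX.
    by rewrite eX in Xq.
  have two : forall X1 X2 q1 q2, F X1 -> F X2 -> X1 q1 -> X2 q2 ->
      exists X, [/\ F X, X q1 & X q2].
    move=> X1 X2 q1 q2 F1 F2 h1 h2; case: (Ftot _ _ F1 F2) => s12.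
      by exists X2; split => //; exact: s12.
    by exists X1; split => //; exact: s12.
  split.
  - move=> x a b [X1 F1 h1] [X2 F2 h2].
    have [X [FX g1 g2]] := two _ _ _ _ F1 F2 h1 h2.
    by have [fX _ _ _ _] := gdF _ _ FX g1; exact: fX g1 g2.
  - move=> x a y b [X1 F1 h1] [X2 F2 h2].
    have [X [FX g1 g2]] := two _ _ _ _ F1 F2 h1 h2.
    by have [_ dX _ _ _] := gdF _ _ FX g1; exists X => //; exact: dX.
  - move=> r x a [X1 F1 h1].
    by have [_ _ sX _ _] := gdF _ _ F1 h1; exists X1 => //; exact: sX.
  - move=> x a [X1 F1 h1].
    by have [_ _ _ pX _] := gdF _ _ F1 h1; exact: pX.
  - have [q [X FX Xq]] : \bigcup_(X in F) X !=set0 by apply/set0P/eqP.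
    by have [_ _ _ _ vX] := gdF _ _ FX Xq; exists X.
have gA : goodG v A.
  case: PA => // A0.
  pose G0 := [set q : E * R | exists s, q.1 = s *: v /\ q.2 = s * p v].
  exfalso; apply: (Amax G0); last first.
    right; split.
    - move=> x a b [s1 [/= e1 ->]] [s2 [/= e2 ->]].
      have : (s1 - s2) *: v = 0 by rewrite scalerBl -e1 -e2 subrr.
      move/eqP; rewrite scaler_eq0 => /orP[|/eqP v0].
        by rewrite subr_eq0 => /eqP ->.
      by rewrite v0 p0 ltxx in pv0.
    - move=> x a y b [s1 [/= -> ->]] [s2 [/= -> ->]].
      by exists (s1 + s2); rewrite scalerDl mulrDl.
    - move=> r x a [s1 [/= -> ->]].
      by exists (r * s1); rewrite scalerA mulrA.
    - move=> x a [s [/= -> ->]].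
      have [s0|s0|->] := ltrgtP s 0; last by rewrite scale0r mul0r p0.
      + have e : s *: v = (- s) *: (- v) by rewrite scaleNr scalerN opprK.
        rewrite e phomE ?oppr_gt0 //.
        have := psub v (- v); rewrite subrr p0 => h.
        nra.
      + by rewrite phomE.
    - by exists 1; rewrite scale1r mul1r.
  rewrite A0; split; first exact: sub0set.
  move=> /(_ (v, p v)) h; have : (set0 : set (E * R)) (v, p v).
    by apply: h; exists 1; rewrite scale1r mul1r.
  by [].
have tot : forall w, exists a, A (w, a).
  move=> w; apply: contrapT => nw.
  have [B [AB gB]] := @goodG_ext v A w gA (fun a h => nw (ex_intro _ a h)).
  by apply: (Amax B AB); right.
have [f Hf] := choice tot.
have [fA dA sA pA vA] := gA.
exists f; split; last split.
- move=> a x y; apply: (fA (a *: x + y)) => //.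
  by apply: dA => //; apply: sA.
- by move=> x; apply: pA.
- exact: fA (Hf v) vA.
Qed.

End HBsec.
Section Conv.
Context {R : realType} {E : lmodType R}.
Lemma convex_comb (C : set E) : convex_set (C : set (convex_lmodType E)) ->
  forall x y (l : R), 0 <= l -> l <= 1 -> C x -> C y -> C (l *: x + (1 - l) *: y).
Proof.
move=> cC x y l l0 l1 Cx Cy.
have := cC x y (Itv01 l0 l1) (mem_set Cx) (mem_set Cy).
by move/set_mem.
Qed.
End Conv.

Section Sep.
Context {R : realType} {E : tvsType R}.

Lemma nbhs0_pos (P : set R^o) : nbhs (0 : R^o) P -> exists2 t : R, 0 < t & P t.
Proof.
move=> /nbhs_ballP [e /= e0 he]; exists (e / 2); first by rewrite divr_gt0.
apply: he; rewrite /ball /= sub0r normrN gtr0_norm ?divr_gt0 //.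
by rewrite ltr_pdivrMr // ltr_pMr // ltr1n.
Qed.

Lemma absorbing (C : set E) : nbhs 0 C -> forall x : E, exists2 r : R, 0 < r & C (r^-1 *: x).
Proof.
move=> C0 x.
have /= := @scale_continuous R E (0, x) C; rewrite scale0r => /(_ C0).
move=> [[B1 B2] /= [nB1 nB2] BU].
have [t t0 Bt] := @nbhs0_pos _ nB1.
exists t^-1; first by rewrite invr_gt0.
rewrite invrK; apply: (BU (t, x)); split => //.
exact: nbhs_singleton.
Qed.


Definition mink (C : set E) (x : E) : R := inf [set r : R | 0 < r /\ C (r^-1 *: x)].

Variable C : set E.
Hypothesis C0 : nbhs 0 C.
Hypothesis cC : convex_set (C : set (convex_lmodType E)).

Let Sne x : [set r : R | 0 < r /\ C (r^-1 *: x)] !=set0.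
Proof. by have [r r0 h] := @absorbing C C0 x; exists r. Qed.

Let Slb x : has_lbound [set r : R | 0 < r /\ C (r^-1 *: x)].
Proof. by exists 0 => r [/ltW]. Qed.

Lemma mink_le x r : 0 < r -> C (r^-1 *: x) -> mink C x <= r.
Proof. by move=> r0 h; apply: ge_inf (Slb x) _ _. Qed.

Lemma mink_glb x m : (forall r, 0 < r -> C (r^-1 *: x) -> m <= r) -> m <= mink C x.
Proof. by move=> h; apply: lb_le_inf (Sne x) _ => r [r0 hr]; exact: h. Qed.

Lemma mink_sub x y : mink C (x + y) <= mink C x + mink C y.
Proof.
have key : forall r s, 0 < r -> C (r^-1 *: x) -> 0 < s -> C (s^-1 *: y) ->
    mink C (x + y) <= r + s.
  move=> r s r0 Cr s0 Cs; apply: mink_le; first exact: addr_gt0.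
  have rs0 : 0 < r + s by exact: addr_gt0.
  have l0 : 0 <= r / (r + s) by rewrite divr_ge0 // ltW.
  have l1 : r / (r + s) <= 1 by rewrite ler_pdivrMr // mul1r lerDl ltW.
  have := @convex_comb _ _ C cC _ _ _ l0 l1 Cr Cs.
  rewrite !scalerA.
  have -> : r / (r + s) * r^-1 = (r + s)^-1 by field; rewrite ?gt_eqF.
  have -> : (1 - r / (r + s)) * s^-1 = (r + s)^-1 by field; rewrite ?gt_eqF.
  by rewrite -scalerDr.
have h1 : forall s, 0 < s -> C (s^-1 *: y) -> mink C (x + y) - s <= mink C x.
  move=> s s0 Cs; apply: mink_glb => r r0 Cr.
  by have := key r s r0 Cr s0 Cs; lra.
have h2 : mink C (x + y) - mink C x <= mink C y.
  apply: mink_glb => s s0 Cs; have := h1 s s0 Cs; lra.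
lra.
Qed.

Lemma mink_hom (t : R) x : 0 < t -> mink C (t *: x) <= t * mink C x.
Proof.
move=> t0; rewrite -ler_pdivrMl //; apply: mink_glb => r r0 Cr.
rewrite ler_pdivrMl //; apply: mink_le; first exact: mulr_gt0.
rewrite scalerA.
have -> : (t * r)^-1 * t = r^-1 by field; rewrite ?gt_eqF.
exact: Cr.
Qed.

Lemma mink_1 x : C x -> mink C x <= 1.
Proof. by move=> Cx; apply: mink_le => //; rewrite invr1 scale1r. Qed.

Lemma mink_out v : C 0 -> ~ C v -> 1 <= mink C v.
Proof.
move=> C0' nCv; rewrite leNgt; apply/negP => h.
have [r [r0 Cr] r1] := inf_lt (Sne v) h.
apply: nCv.
have := @convex_comb _ _ C cC _ _ _ (ltW r0) (ltW r1) Cr C0'.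
by rewrite scaler0 addr0 scalerA mulfV ?gt_eqF // scale1r.
Qed.

End Sep.

Section Lin.
Context {R : realType} {E : lmodType R}.
Variable f : E -> R.
Hypothesis lin : forall (a : R) x y, f (a *: x + y) = a * f x + f y.
Lemma lin0 : f 0 = 0.
Proof. by have := lin 1 0 0; rewrite scale1r addr0 mul1r => h; lra. Qed.
Lemma linD x y : f (x + y) = f x + f y.
Proof. by have := lin 1 x y; rewrite scale1r mul1r. Qed.
Lemma linZ a x : f (a *: x) = a * f x.
Proof. by have := lin a x 0; rewrite !addr0 lin0 addr0. Qed.
Lemma linN x : f (- x) = - f x.
Proof. by rewrite -scaleN1r linZ mulN1r. Qed.
Lemma linB x y : f (x - y) = f x - f y.
Proof. by rewrite linD linN. Qed.
End Lin.

Section Sep2.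
Context {R : realType} {E : tvsType R}.

Lemma separation (hE : hausdorff_space E) (v : E) : v != 0 ->
  exists f : E -> R, is_dual f /\ f v != 0.
Proof.
move=> v0.
have [A [B [nA nB AB0]]] : exists A B, [/\ nbhs (0 : E) A, nbhs v B & A `&` B = set0].
  apply: contrapT => H.
  have e : (0 : E) = v.
    apply: hE => A B nA nB; apply: contrapT => h; apply: H; exists A, B; split => //.
    apply/seteqP; split => // z Hz; exfalso; apply: h; exists z.
    exact: Hz.
  by rewrite -e eqxx in v0.
have nAv : ~ A v.
  move=> Av; have : (A `&` B) v by split => //; exact: nbhs_singleton.
  by rewrite AB0.
have [Bs cBs [oBs bBs]] := @locally_convex R E.
have [C [BsC C0'] CA] := bBs 0 A nA.
have oC : open C := oBs C BsC.
have cC := cBs C (mem_set BsC).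
have nC : nbhs (0 : E) C by apply: open_nbhs_nbhs; split.
pose p := mink C.
have nCv : ~ C v by move=> /CA.
have pv1 : 1 <= p v := mink_out C nC cC v C0' nCv.
have [f [lin [fle fv]]] := @HB_exists R E p (mink_sub C nC cC) (fun r x h => mink_hom C nC r x h) v
  (lt_le_trans ltr01 pv1).
exists f; split; last by rewrite fv gt_eqF // (lt_le_trans ltr01 pv1).
split => //.
move=> x0; apply/cvgrPdist_lt => e e0.
pose K := C `&` (-%R @` C).
have nK : nbhs (0 : E) K.
  apply: filterI => //; exact: nbhs0N.
have bK : forall u, K u -> `|f u| <= 1.
  move=> u [Cu [c Cc ec]]; rewrite ler_norml; apply/andP; split.
    rewrite -ec (@linN _ _ f lin) lerN2; apply: le_trans (fle c) _; exact: mink_1 C c Cc.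
  by apply: le_trans (fle u) _; exact: mink_1 C u Cu.
have e20 : e / 2 != 0 by rewrite gt_eqF // divr_gt0.
have := nbhsZ e20 nK; rewrite scaler0 => /(nbhsB x0); rewrite addr0 => nW.
apply: filterS nW => y [y1 [k Kk <-] <-].
rewrite (@linD _ _ f lin) (@linZ _ _ f lin) opprD addNKr normrN normrM gtr0_norm ?divr_gt0 //.
have := bK k Kk; have : 0 < e by []; nra.
Qed.

End Sep2.

Section Helpers.
Context {R : realType} {E : tvsType R}.

Lemma is_dual_comb (g h : E -> R) (al : R) : is_dual g -> is_dual h ->
  is_dual (fun y => al * g y + h y).
Proof.
move=> [lg cg] [lh ch]; split.
  move=> a x y; rewrite lg lh; ring.
move=> x; apply: cvgD; last exact: ch.
by apply: cvgMr; exact: cg.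
Qed.

Lemma is_dual_scale (g : E -> R) (al : R) : is_dual g -> is_dual (fun y => al * g y).
Proof.
move=> [lg cg]; split.
  move=> a x y; rewrite lg; ring.
by move=> x; apply: cvgMr; exact: cg.
Qed.

Lemma scale_nbhs (r : R) (x : E) (N : set E) : nbhs (r *: x) N ->
  nbhs x [set p | N (r *: p)].
Proof.
move=> nN; have /= := @scale_continuous R E (r, x) N nN.
move=> [[B1 B2] /= [nB1 nB2] BU].
apply: filterS nB2 => p Bp; apply: (BU (r, p)); split => //.
exact: nbhs_singleton.
Qed.

Lemma add_nbhs (x y : E) (N : set E) : nbhs (x + y) N ->
  exists2 A, nbhs x A & exists2 B, nbhs y B & forall p q, A p -> B q -> N (p + q).
Proof.
move=> nN; have /= := @add_continuous E (x, y) N nN.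
move=> [[B1 B2] /= [nB1 nB2] BU].
exists B1 => //; exists B2 => // p q h1 h2; exact: (BU (p, q)).
Qed.

Lemma shift_nbhs (z : E) (A : set E) : nbhs z A -> nbhs (0 : E) [set y | A (z + y)].
Proof.
move=> nA; have nA' : nbhs (z + 0) A by rewrite addr0.
have [A1 nA1 [B nB h]] := @add_nbhs z 0 A nA'.
apply: filterS nB => y By; apply: h => //; exact: nbhs_singleton.
Qed.

End Helpers.

Lemma conv_aff (R : realType) (E : lmodType R) (z d u1 u2 : E) (L s1 s2 : R) :
  L *: (z + s1 *: d + u1) + (1 - L) *: (z + s2 *: d + u2) =
  z + (L * s1 + (1 - L) * s2) *: d + (L *: u1 + (1 - L) *: u2).
Proof.
rewrite !scalerDr !scalerA addrACA [X in X + _ = _]addrACA -scalerDl.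
have -> : L + (1 - L) = 1 by rewrite addrC subrK.
by rewrite scale1r -scalerDl.
Qed.

Section Seg.
Context {R : realType} {E : tvsType R}.
Variable hE : hausdorff_space E.
Variable T : set (E * (E -> R)).
Hypothesis hT : monotone_nonempty T.
Hypothesis H1 : forall V : set E, open_convex V -> V `&` dom_op T !=set0 ->
      [set x | exists xs, is_dual xs /\
         (fitz (restr_op T V) (x, xs) < (xs x)%:E)%E] `&` V
      `<=` closure (dom_op T).

Lemma seg a a' b b' (l : R) : 0 <= l -> l <= 1 -> T (a, a') -> T (b, b') ->
  closure (dom_op T) (l *: a + (1 - l) *: b).
Proof.
move=> l0 l1 Ta Tb.
have [hdual [hmon _]] := hT.
set z := l *: a + (1 - l) *: b.
apply: contrapT => nz.
have [N nN ND] : exists2 N, nbhs z N & forall u, N u -> ~ dom_op T u.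
  apply: contrapT => h; apply: nz => B nB; apply: contrapT => h2; apply: h.
  by exists B => // u Bu Du; apply: h2; exists u.
have Da : dom_op T a by exists a'.
have az : a - z != 0.
  apply/negP; rewrite subr_eq0 => /eqP eaz; apply: nz; rewrite -eaz.
  exact: subset_closure.
have [g [dg gaz]] := separation hE (a - z) az.
pose w := fun y => (- (g (a - z))^-1) * g y.
have dw : is_dual w := is_dual_scale _ (- (g (a - z))^-1) dg.
have lw := dw.1.
have wd : w (a - z) = -1 by rewrite /w mulNr mulVf.
have nN' : nbhs (z + 0) N by rewrite addr0.
have [A nA [B2 nB2 hAB]] := add_nbhs _ _ _ nN'.
have nA0' : nbhs (0 *: (a - z)) [set y | A (z + y)].
  by rewrite scale0r; exact: shift_nbhs.
have /= := @scale_continuous R E (0, a - z) _ nA0'.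
move=> [[S1 S2] /= [nS1 nS2] SU].
have [eps /= eps0 heps] := (iffLR (nbhs_ballP _ _)) nS1.
have small : forall s, 0 <= s -> s < eps -> forall u, B2 u -> N (z + s *: (a - z) + u).
  move=> s s0 se u Bu; apply: hAB => //; apply: (SU (s, a - z)); split => /=.
    by apply: heps; rewrite /ball /= sub0r normrN ger0_norm.
  exact: nbhs_singleton.
pose eta := eps / 4.
have eta0 : 0 < eta by rewrite divr_gt0.
have nW : nbhs (0 : E) [set u | `|w 0 - w u| < eta].
  by have := dw.2 0; move/cvgrPdist_lt => /(_ eta eta0).
have nUB : nbhs (0 : E) (B2 `&` [set u | `|w 0 - w u| < eta]) by apply: filterI.
have [Bs cBs [oBs bBs]] := @locally_convex R E.
have [U [BsU U0] UB] := bBs 0 _ nUB.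
have oU : open U := oBs U BsU.
have cU := cBs U (mem_set BsU).
pose V := [set v : E | exists s u, [/\ 0 <= s, s < 2, U u & v = z + s *: (a - z) + u]].
have oV : open V.
  rewrite openE => v [s [u [s0 s2 Uu ->]]]; rewrite /interior.
  have nU : nbhs u U by apply: open_nbhs_nbhs; split.
  have := nbhsB (z + s *: (a - z)) nU.
  by apply: filterS => y [u' Uu' <-]; exists s, u'; split.
have cV : convex_set (V : set (convex_lmodType E)).
  move=> x y lam /set_mem [s1 [u1 [s10 s12 Uu1 ->]]] /set_mem [s2 [u2 [s20 s22 Uu2 ->]]].
  apply/mem_set.
  have lam0 : 0 <= lam%:num by [].
  have lam1 : lam%:num <= 1 by [].
  exists (lam%:num * s1 + (1 - lam%:num) * s2), (lam%:num *: u1 + (1 - lam%:num) *: u2).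
  split.
  - by nra.
  - have [->|lp] := eqVneq lam%:num 0; first by rewrite mul0r add0r subr0 mul1r.
    have lpos : 0 < lam%:num by rewrite lt_neqAle eq_sym lp lam0.
    have h1 : 0 < lam%:num * (2 - s1) by rewrite mulr_gt0 // subr_gt0.
    have h2 : 0 <= (1 - lam%:num) * (2 - s2) by rewrite mulr_ge0 // subr_ge0 // ltW.
    lra.
  - exact: (@convex_comb _ _ U cU _ _ _ lam0 lam1 Uu1 Uu2).
  - exact: conv_aff.
have zV : V z by exists 0, 0; split => //; rewrite scale0r !addr0.
have aV : V a.
  exists 1, 0; split => //; first exact: ltr1n.
  by rewrite scale1r addr0 addrC subrK.
have oVc : open_convex V by split.
have VD : V `&` dom_op T !=set0 by exists a.
pose K0 := l * a' a - l * a' z + ((1 - l) * b' b - (1 - l) * b' z).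
pose del := eps / 2.
have del0 : 0 < del by rewrite divr_gt0.
pose mu := (`|K0| + 1) / del.
have mu0 : 0 <= mu by rewrite divr_ge0 // ?ltW // addr_ge0.
have mudel : mu * del = `|K0| + 1 by rewrite /mu divfK // gt_eqF.
have [la' _] := hdual _ Ta.
have [lb' _] := hdual _ Tb.
pose xs := fun y => l * a' y + ((1 - l) * b' y + mu * w y).
have dxs : is_dual xs.
  apply: is_dual_comb; first exact: (hdual _ Ta).
  apply: is_dual_comb; first exact: (hdual _ Tb).
  exact: is_dual_scale.
have l1' : 0 <= 1 - l by rewrite subr_ge0.
have key : forall u u', T (u, u') -> V u -> u' z + xs u - u' u <= xs z - 1.
  move=> u u' Tu [s [u0 [s0 s2 Uu0 eu]]].
  have [lu' _] := hdual _ Tu.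
  have se : eps <= s.
    rewrite leNgt; apply/negP => se.
    apply: (ND u); last by exists u'.
    by rewrite eu; apply: small => //; exact: (UB _ Uu0).1.
  have wu : w u - w z <= - del.
    have -> : w u = w z + s * w (a - z) + w u0.
      by rewrite eu (@linD _ _ w lw) (@linD _ _ w lw) (@linZ _ _ w lw).
    rewrite wd.
    have := (UB _ Uu0).2; rewrite /= (@lin0 _ _ w lw) sub0r normrN ltr_norml.
    move=> /andP [_ h].
    rewrite /del; rewrite /eta in h; lra.
  have m1 := hmon _ _ Tu Ta.
  have m2 := hmon _ _ Tu Tb.
  rewrite /= !(@linB _ _ u' lu') !(@linB _ _ a' la') in m1.
  rewrite /= !(@linB _ _ u' lu') !(@linB _ _ b' lb') in m2.
  have ez : u' z = l * u' a + (1 - l) * u' b.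
    by rewrite /z (@linD _ _ u' lu') !(@linZ _ _ u' lu').
  have m1' := mulr_ge0 l0 m1.
  have m2' := mulr_ge0 l1' m2.
  have wb : mu * (w u - w z) <= - (mu * del).
    by have := ler_wpM2l mu0 wu; rewrite [mu * - del]mulrN.
  have K0le := ler_norm K0.
  rewrite /K0 in K0le mudel.
  rewrite /xs ez.
  nra.
apply: nz; apply: (@H1 V oVc VD z); split => //.
exists xs; split => //.
rewrite /fitz; apply: (@le_lt_trans _ _ (xs z - 1)%:E).
  apply: ge_ereal_sup => _ [[u u'] [Tu Vu] <-] /=; rewrite lee_fin; exact: key.
by rewrite lte_fin ltrBlDr ltrDl ltr01.
Qed.


Lemma closure_convex : convex_set (closure (dom_op T) : set (convex_lmodType E)).
Proof.
move=> x y lam /set_mem cx /set_mem cy; apply/mem_set.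
have l0 : 0 <= lam%:num by [].
have l1 : lam%:num <= 1 by [].
change (closure (dom_op T) (lam%:num *: x + (1 - lam%:num) *: y)).
move=> O nO.
have [Op [oOp Opz] OpO] : exists2 Op, open_nbhs (lam%:num *: x + (1 - lam%:num) *: y) Op & Op `<=` O.
  by move: nO; rewrite nbhsE.
have nOp : nbhs (lam%:num *: x + (1 - lam%:num) *: y) Op.
  by apply: open_nbhs_nbhs; split.
have [A1 nA1 [A2 nA2 hA]] := add_nbhs _ _ _ nOp.
have nx := scale_nbhs _ _ _ nA1.
have ny := scale_nbhs _ _ _ nA2.
have [a [[a' Ta] A1a]] := cx _ nx.
have [b [[b' Tb] A2b]] := cy _ ny.
have cz := @seg a a' b b' _ l0 l1 Ta Tb.
have Opz2 := hA _ _ A1a A2b.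
have [d [Dd Opd]] : dom_op T `&` Op !=set0.
  by apply: cz; apply: open_nbhs_nbhs; split.
by exists d; split => //; exact: OpO.
Qed.

End Seg.

Theorem theorem2p7 (R : realType) (E : tvsType R)
  (hE : hausdorff_space E) (ntE : exists x : E, x != 0)
  (T : set (E * (E -> R))) (hT : monotone_nonempty T) :
  ((forall V : set E, open_convex V -> V `&` dom_op T !=set0 ->
      [set x | exists xs, is_dual xs /\
         (fitz (restr_op T V) (x, xs) < (xs x)%:E)%E] `&` V
      `<=` closure (dom_op T)) ->
    convex_set (closure (dom_op T) : set (convex_lmodType E)))
  /\ (locatable T (closure (dom_op T)) ->
    convex_set (closure (dom_op T) : set (convex_lmodType E)))
  /\ (locally_NI T ->
    convex_set (closure (dom_op T) : set (convex_lmodType E))).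
Proof.
split; first by move=> H; exact: (@closure_convex R E hE T hT H).
split.
  move=> Hloc; apply: (@closure_convex R E hE T hT) => V oV VD x [[xs [dxs hlt]] Vx].
  apply: (Hloc V oV VD x); split => //; exists xs; split => //; exact: ltW.
move=> Hni; apply: (@closure_convex R E hE T hT) => V oV VD x [[xs [dxs hlt]] Vx].
exfalso; have := Hni V oV VD x xs Vx dxs.
by move/(lt_le_trans hlt); rewrite ltxx.
Qed.
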